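(* Let $\mathbb F\in\{\mathbb C,\mathbb R\}$, $n>1$, and $\gamma\in\mathbb F^n$ with $\operatorname{diag}(\gamma_1,\dots,\gamma_n)$ not proportional to the identity. Then the functions $|X^{\varkappa,n}_{1,k}|$, $k=1,\dots,[n/2]$, where $\varkappa=n-k+1$, are functionally independent (global) relative invariants of the coadjoint action ${\rm Ad}^*_{{\rm T}_\gamma(n)}$ on $\mathfrak t_\gamma^*(n)$.
   Context: $\mathfrak t_\gamma(n)$ is the Lie algebra over $\mathbb F$ with basis $e_{ij}$ ($1\leqslant i<j\leqslant n$), $f$, brackets $[e_{ij},e_{i'j'}]=\delta_{i'j}e_{ij'}-\delta_{ij'}e_{i'j}$, $[f,e_{ij}]=(\gamma_i-\gamma_j)e_{ij}$; it is the Lie algebra of ${\rm T}_\gamma(n)=\{B\text{ nonsingular upper triangular}\mid\exists\varepsilon:\ b_{ii}=e^{\gamma_i\varepsilon}\}$ with $e_{ij}\sim E^n_{ij}$, $f\sim\operatorname{diag}(\gamma)$ and coadjoint action $({\rm Ad}^*_B\xi)(y)=\xi(B^{-1}yB)$. $x_{ji}$ ($i<j$) is the coordinate on $\mathfrak t_\gamma^*(n)$ dual to $e_{ij}$; $X$ is the strictly lower triangular matrix with entries $x_{ij}$ ($i>j$); $X^{i_1,i_2}_{j_1,j_2}$ is the submatrix with rows $i_1..i_2$ and columns $j_1..j_2$, $|\cdot|$ the determinant. A function $F$ on a $G$-space $M$ is a (global) relative invariant if $F(g\cdot x)=\mu(g,x)F(x)$ for all $g\in G$, $x\in M$, for some multiplier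 $\mu\colon G\times M\to\mathbb F$. *)

(* Defs.v *)
From HB Require Import structures.
From mathcomp Require Import all_boot all_order all_algebra.
From mathcomp Require Import complex.
From mathcomp Require Import all_classical all_reals all_analysis.
Set Implicit Arguments. Unset Strict Implicit. Unset Printing Implicit Defensive.
Import Order.TTheory GRing.Theory Num.Theory.
Local Open Scope ring_scope.

(* Generic setting: a numeric field F (R or C), an exponential ex on F, *)
(* n, and gamma in F^n (0-indexed: gamma i, i : 'I_n).                  *)
Section Coadjoint.
Variables (F : numFieldType) (ex : F -> F) (n : nat) (gamma : 'I_n -> F).

(* A point xi of t_gamma^*(n) is given by its coordinates:             *)
(*   xi.1 : the strictly lower triangular matrix X, X j i = x_{ji}     *)
(*          = xi(e_{ij}) (i < j);                                      *)
(*   xi.2 : the coordinate xi(f).                                      *)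
Definition tstar := ('M[F]_n * F)%type.

Definition in_tstar (xi : tstar) : Prop :=
  forall i j : 'I_n, (i <= j)%N -> xi.1 i j = 0.

Definition in_Tgamma (B : 'M[F]_n) : Prop :=
  [/\ (forall i j : 'I_n, (j < i)%N -> B i j = 0),
      B \in unitmx &
      exists eps : F, forall i : 'I_n, B i i = ex (gamma i * eps)].

(* Value of xi on the element  a f + sum_{i<j} M i j e_{ij}  of t_gamma(n)
   (only the strictly upper entries of M are used). *)
Definition pairing (xi : tstar) (a : F) (M : 'M[F]_n) : F :=
  a * xi.2 + \sum_(i < n) \sum_(j < n | (i < j)%N) xi.1 j i * M i j.

(* Coadjoint action (Ad^*_B xi)(y) = xi(B^{-1} y B), in coordinates:
   e_{ij} ~ E_{ij} (f-coefficient 0), f ~ diag(gamma) (f-coefficient 1);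
   for upper triangular B the diagonal of B^{-1} y B equals that of y. *)
Definition coad (B : 'M[F]_n) (xi : tstar) : tstar :=
  (\matrix_(j < n, i < n)
      (if (i < j)%N then pairing xi 0 (invmx B *m delta_mx i j *m B) else 0),
   pairing xi 1 (invmx B *m diag_mx (\row_k gamma k) *m B)).

Definition rel_invariant (Phi : tstar -> F) : Prop :=
  exists mu : 'M[F]_n -> tstar -> F,
    forall (B : 'M[F]_n) (xi : tstar), in_Tgamma B -> in_tstar xi ->
      Phi (coad B xi) = mu B xi * Phi xi.

Definition ent (X : 'M[F]_n) (i j : nat) : F :=
  match (insub i : option 'I_n), (insub j : option 'I_n) with
  | Some i', Some j' => X i' j'
  | _, _ => 0
  end.

(* |X^{kappa,n}_{1,k}| with kappa = n-k+1 (1-based rows kappa..n,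
   columns 1..k); 0-based rows n-k .. n-1, columns 0 .. k-1. *)
Definition minorX (k : nat) (xi : tstar) : F :=
  \det (\matrix_(r < k, c < k) ent xi.1 (n - k + r) c).

Definition is_pderiv (Phi : tstar -> F) (xi v : tstar) (L : F) : Prop :=
  forall e : F, 0 < e -> exists2 d : F, 0 < d &
    forall h : F, h != 0 -> `|h| < d ->
      `|(Phi (xi.1 + h *: v.1, xi.2 + h * v.2) - Phi xi) / h - L| < e.

Definition indep_differentials (m : nat) (Phi : 'I_m -> tstar -> F)
    (xi : tstar) : Prop :=
  exists (D : 'I_m -> 'I_n -> 'I_n -> F) (Dz : 'I_m -> F),
    [/\ forall k (j i : 'I_n), (i < j)%N ->
          is_pderiv (Phi k) xi (delta_mx j i, 0) (D k j i),
        forall k, is_pderiv (Phi k) xi (0, 1) (Dz k) &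
        forall a : 'I_m -> F,
          (forall j i : 'I_n, (i < j)%N -> \sum_k a k * D k j i = 0) ->
          \sum_k a k * Dz k = 0 ->
          forall k, a k = 0].

(* Functional independence: the differentials are linearly independent on a
   dense subset of t_gamma^*(n). *)
Definition func_independent (m : nat) (Phi : 'I_m -> tstar -> F) : Prop :=
  forall xi : tstar, in_tstar xi -> forall e : F, 0 < e ->
    exists xi' : tstar,
      [/\ in_tstar xi',
          forall i j : 'I_n, `|xi'.1 i j - xi.1 i j| < e,
          `|xi'.2 - xi.2| < e &
          indep_differentials Phi xi'].

Definition corollary1_statement : Prop :=
  (forall k : 'I_(n./2), rel_invariant (minorX k.+1)) /\
  func_independent (fun k : 'I_(n./2) => minorX k.+1).

End Coadjoint.

Local Open Scope complex_scope.
Definition cexp (R : realType) (z : R[i]) : R[i] :=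
  let: Complex a b := z in
  (expR a)%:C * ((cos b)%:C + 'i * (sin b)%:C).

(* Main.v *)
Require Import Defs.
From HB Require Import structures.
From mathcomp Require Import all_boot all_order all_algebra.
From mathcomp Require Import complex.
From mathcomp Require Import all_classical all_reals all_analysis.
From mathcomp Require Import fingroup perm.
From mathcomp Require Import ring zify.
Import Order.TTheory GRing.Theory Num.Theory.
Local Open Scope ring_scope.

Section Gen.
Variables (F : numFieldType) (n : nat).
Implicit Types (X Y : 'M[F]_n).

Lemma entE X (i j : 'I_n) : ent X i j = X i j.
Proof. by rewrite /ent !valK. Qed.

Lemma ent_ord X i j (hi : (i < n)%N) (hj : (j < n)%N) :
  ent X i j = X (Ordinal hi) (Ordinal hj).
Proof. by rewrite /ent (insubT (fun k => k < n)%N hi) (insubT (fun k => k < n)%N hj). Qed.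

Lemma ent_outl X i j : (n <= i)%N -> ent X i j = 0.
Proof. by move=> h; rewrite /ent insubF //; apply/negbTE; rewrite -leqNgt. Qed.

Lemma ent_outr X i j : (n <= j)%N -> ent X i j = 0.
Proof.
move=> h; rewrite /ent; case: insubP => [i' _ _|_] //.
by rewrite insubF //; apply/negbTE; rewrite -leqNgt.
Qed.

Lemma ent_lin X Y (h : F) i j : ent (X + h *: Y) i j = ent X i j + h * ent Y i j.
Proof.
case: (ltnP i n) => hi; last by rewrite !ent_outl // mulr0 addr0.
case: (ltnP j n) => hj; last by rewrite !ent_outr // mulr0 addr0.
by rewrite !(ent_ord _ _ _ hi hj) !mxE.
Qed.

Lemma ent_delta (a b : 'I_n) i j :
  ent (delta_mx a b) i j = ((i == a) && (j == b))%:R :> F.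
Proof.
case: (ltnP i n) => hi; last first.
  rewrite ent_outl // (_ : (i == a) = false) //; apply/negbTE.
  by apply/eqP => e; move: (ltn_ord a); rewrite -e ltnNge hi.
case: (ltnP j n) => hj; last first.
  rewrite ent_outr // (_ : (j == b) = false) ?andbF //; apply/negbTE.
  by apply/eqP => e; move: (ltn_ord b); rewrite -e ltnNge hj.
by rewrite (ent_ord _ _ _ hi hj) mxE.
Qed.

Definition blk s X : 'M[F]_s := \matrix_(r < s, c < s) ent X (n - s + r) c.

Lemma minorE s (xi : tstar F n) : minorX s xi = \det (blk s xi.1).
Proof. by []. Qed.

Lemma det_affine s (M E : 'M[F]_s) h :
  (forall r c r' c', E r c != 0 -> E r' c' != 0 -> r = r') ->
  \det (M + h *: E) = \det M + h * (\det (M + E) - \det M).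
Proof.
move=> hE.
case: (pickP (fun rc : 'I_s * 'I_s => E rc.1 rc.2 != 0)) => [[r0 c0] /= h0|h0]; last first.
  have -> : E = 0.
    by apply/matrixP => r c; have := h0 (r,c); rewrite /= mxE => /negbFE/eqP.
  by rewrite scaler0 !addr0 subrr mulr0 addr0.
rewrite (@determinant_multilinear _ _ _ M (M + E) r0 (1 - h) h).
- ring.
- by apply/rowP => c; rewrite !mxE; ring.
- apply/matrixP => r c; rewrite !mxE.
  have [->|hne] := eqVneq (E (lift r0 r) c) 0; first by rewrite mulr0 addr0.
  by have := hE _ _ _ _ hne h0 => /eqP; rewrite eq_sym (negbTE (neq_lift r0 r)).
- apply/matrixP => r c; rewrite !mxE.
  have [->|hne] := eqVneq (E (lift r0 r) c) 0; first by rewrite mulr0 !addr0.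
  by have := hE _ _ _ _ hne h0 => /eqP; rewrite eq_sym (negbTE (neq_lift r0 r)).
Qed.

Lemma blk_lin s X Y h : blk s (X + h *: Y) = blk s X + h *: blk s Y.
Proof. by apply/matrixP => r c; rewrite !mxE ent_lin. Qed.

Lemma minor_affine s X (j i : 'I_n) h :
  \det (blk s (X + h *: delta_mx j i)) =
  \det (blk s X) + h * (\det (blk s (X + delta_mx j i)) - \det (blk s X)).
Proof.
have e : X + delta_mx j i = X + 1 *: delta_mx j i by rewrite scale1r.
rewrite e !blk_lin scale1r.
apply: det_affine => r c r' c'; rewrite !mxE !ent_delta.
move=> h1 h2.
have e1 : (n - s + r)%N = j.
  by apply/eqP; apply: contraNT h1 => /negbTE ->.
have e2 : (n - s + r')%N = j.
  by apply/eqP; apply: contraNT h2 => /negbTE ->.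
apply: ord_inj; lia.
Qed.


Lemma corner_diff k X (jc ic : 'I_n) : (k < n)%N -> jc = (n - k.+1)%N :> nat -> ic = k :> nat ->
  \det (blk k.+1 (X + delta_mx jc ic)) - \det (blk k.+1 X) = (-1) ^+ k * \det (blk k X).
Proof.
move=> hk ej ei.
set M := blk k.+1 X.
have eE : blk k.+1 (X + delta_mx jc ic) = M + \matrix_(r, c) ((r == 0) && (c == ord_max))%:R.
  have e : X + delta_mx jc ic = X + 1 *: delta_mx jc ic by rewrite scale1r.
  rewrite e blk_lin scale1r; congr (_ + _); apply/matrixP => r c; rewrite !mxE ent_delta.
  congr ((_ : bool)%:R); congr (_ && _); apply/eqP/eqP => h.
  - by apply: ord_inj => /=; lia.
  - by rewrite h /=; lia.
  - by apply: ord_inj => /=; lia.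
  - by rewrite h /=; lia.
rewrite eE (expand_det_row _ 0) [X in _ - X](expand_det_row _ 0) -sumrB.
rewrite (bigD1 ord_max) //= big1 => [|c hc].
  have ec : cofactor (M + \matrix_(r, c) ((r == 0) && (c == ord_max))%:R) 0 ord_max = cofactor M 0 ord_max.
    rewrite /cofactor; congr (_ * \det _); apply/matrixP => r c; rewrite !mxE.
    by rewrite (_ : (lift 0 r == 0) = false) ?addr0 //; apply/negbTE/neq_lift.
  rewrite ec !mxE eqxx /= addr0 eqxx mulrDl addrAC subrr add0r mul1r /cofactor add0n.
  congr (_ * \det _); apply/matrixP => r c; rewrite !mxE.
  congr (ent X _ _).
  - rewrite /= /bump /=; move: (nat_of_ord r) => rr; clear -hk; lia.
  - have hc : (c < k)%N := ltn_ord c; rewrite /= /bump; case: leqP => h //; by move: hc; rewrite ltnNge h.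
have ec : cofactor (M + \matrix_(r, c) ((r == 0) && (c == ord_max))%:R) 0 c = cofactor M 0 c.
  rewrite /cofactor; congr (_ * \det _); apply/matrixP => r c'; rewrite !mxE.
  by rewrite (_ : (lift 0 r == 0) = false) ?addr0 //; apply/negbTE/neq_lift.
by rewrite ec !mxE eqxx (negbTE hc) /= addr0 subrr.
Qed.

Lemma inv_upper (B : 'M[F]_n) : (forall i j : 'I_n, (j < i)%N -> B i j = 0) ->
  B \in unitmx -> forall i j : 'I_n, (j < i)%N -> invmx B i j = 0.
Proof.
move=> hB hU.
have hd : forall i : 'I_n, B i i != 0.
  move: hU; rewrite unitmxE -det_tr det_trig; last first.
    by apply/is_trig_mxP => i j hij; rewrite mxE hB.
  by rewrite unitfE => /prodf_neq0 h i; have := h i isT; rewrite mxE.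
have hM := mulVmx hU.
suff: forall c (i j : 'I_n), j = c :> nat -> (j < i)%N -> invmx B i j = 0.
  by move=> H i j; apply: H.
elim/ltn_ind => c IH i j ejc hji.
move/matrixP: hM => /(_ i j); rewrite !mxE (bigD1 j) //= big1 => [|q hq].
  rewrite (_ : (i == j) = false); last by apply/negbTE; rewrite neq_ltn hji orbT.
  by rewrite addr0 => /eqP; rewrite mulf_eq0 (negbTE (hd j)) orbF => /eqP.
case: (ltngtP q j) => hqj.
- by rewrite (IH q) ?mul0r //; [rewrite -ejc | apply: ltn_trans hji].
- by rewrite hB ?mulr0.
- by move: hq; rewrite (ord_inj hqj) eqxx.
Qed.


Lemma mul_delta3 (A C : 'M[F]_n) (a b p q : 'I_n) :
  (A *m delta_mx a b *m C) p q = A p a * C b q.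
Proof.
rewrite !mxE (bigD1 b) //= big1 => [|x hx].
  rewrite !mxE (bigD1 a) //= big1 => [|y hy]; last by rewrite !mxE (negbTE hy) mulr0.
  by rewrite !mxE !eqxx mulr1 !addr0.
rewrite !mxE big1 ?mul0r // => y _; rewrite !mxE (negbTE hx) andbF mulr0 //.
Qed.

Lemma sum_shift (G : nat -> F) s : (s <= n)%N ->
  \sum_(r < s) G (n - s + r)%N = \sum_(q < n | (n - s <= q)%N) G q.
Proof.
move=> hs.
rewrite (_ : \sum_(q < n | (n - s <= q)%N) G q = \sum_(n - s <= q < n) G q); last by rewrite big_geq_mkord.
rewrite -[X in \sum_(X <= q < n) _](add0n (n - s)%N) big_addn subKn // big_mkord.
by apply: eq_bigr => r _; rewrite addnC.
Qed.

Definition upper (B : 'M[F]_n) := forall i j : 'I_n, (j < i)%N -> B i j = 0.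

Lemma ent_upper B a b : upper B -> (b < a)%N -> ent B a b = 0.
Proof.
move=> hB hab; case: (ltnP a n) => ha; last by rewrite ent_outl.
have hb : (b < n)%N by apply: ltn_trans ha.
by rewrite (ent_ord _ _ _ ha hb) hB.
Qed.

Lemma blk_coad (gamma : 'I_n -> F) (B : 'M[F]_n) (xi : tstar F n) s :
  upper B -> B \in unitmx -> (s + s <= n)%N ->
  blk s (coad gamma B xi).1 =
  (\matrix_(r < s, c < s) ent B (n - s + r) (n - s + c)) *m blk s xi.1 *m
  (\matrix_(r < s, c < s) ent (invmx B) r c).
Proof.
move=> hB hU hs.
have hBi : upper (invmx B) by apply: inv_upper.
apply/matrixP => r c.
have hJ : (n - s + r < n)%N by move: (ltn_ord r) => hr; lia.
have hc : (c < n)%N by move: (ltn_ord c) => hc; lia.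
rewrite mxE (ent_ord _ _ _ hJ hc) /coad /= mxE /=.
rewrite ifT; last by move: (ltn_ord c) => hc'; lia.
rewrite /pairing mul0r add0r !mxE.
set J := (n - s + r)%N.
have hsn : (s <= n)%N by lia.
have e1 : forall c' : 'I_s, (\sum_(r' < s) ent B J (n - s + r') * ent xi.1 (n - s + r') c') =
    \sum_(q < n | (n - s <= q)%N) ent B J q * ent xi.1 q c'.
  by move=> c'; exact: (sum_shift (fun q => ent B J q * ent xi.1 q c')).
under [RHS]eq_bigr => c' _ do rewrite !mxE.
under [RHS]eq_bigr => c' _ do under eq_bigr => r' _ do rewrite !mxE.
under [RHS]eq_bigr => c' _ do rewrite e1.
rewrite (big_ord_widen n (fun c' : nat => (\sum_(q < n | (n - s <= q)%N) ent B J q * ent xi.1 q c') * ent (invmx B) c' c)) //.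
rewrite [RHS]big_mkcond; apply: eq_bigr => p _ /=.
rewrite big_mkcond.
case: (ltnP p s) => hp.
  rewrite mulr_suml [RHS]big_mkcond; apply: eq_bigr => q _ /=.
  rewrite mul_delta3 -[xi.1 q p]entE -[invmx B p _]entE -[B _ q]entE /=.
  case: (leqP (n - s) q) => hq.
    by rewrite ifT; [ring | lia].
  by rewrite (ent_upper _ _ _ hB) ?mul0r; [case: ifP => _; rewrite ?mulr0 | lia].
apply: big1 => q _.
rewrite mul_delta3 -[invmx B p _]entE /= (ent_upper _ _ _ hBi) ?mul0r ?mulr0; last by move: (ltn_ord c); lia.
by case: ifP.
Qed.


Lemma relinv (ex : F -> F) (gamma : 'I_n -> F) s : (s + s <= n)%N ->
  rel_invariant ex gamma (@minorX F n s).
Proof.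
move=> hs.
exists (fun B _ => \det (\matrix_(r < s, c < s) ent B (n - s + r) (n - s + c)) *
                   \det (\matrix_(r < s, c < s) ent (invmx B) r c)).
move=> B xi [hB hU _] _.
by rewrite !minorE blk_coad // !det_mulmx; ring.
Qed.

Lemma half2 : (n./2 + n./2 <= n)%N.
Proof. by rewrite addnn -{2}(odd_double_half n) leq_addl. Qed.

Definition Pm : 'M[F]_n := \matrix_(a, b) (((a + b)%N == n.-1) && (b < n./2)%N)%:R.

Definition Jm s : 'M[F]_s := perm_mx (perm (@rev_ord_inj s)).

Lemma JmK s : Jm s *m Jm s = 1%:M.
Proof.
rewrite /Jm -perm_mxM (_ : (_ * _)%g = 1%g) ?perm_mx1 //.
by apply/permP => i; by rewrite permM !permE rev_ordK.
Qed.

Lemma blkP s : (s <= n./2)%N -> blk s Pm = Jm s.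
Proof.
move=> hs; have h2 := half2.
apply/matrixP => r c; rewrite !mxE.
have hr := ltn_ord r; have hc := ltn_ord c.
have hJ : (n - s + r < n)%N by lia.
have hc' : (c < n)%N by lia.
rewrite (ent_ord _ _ _ hJ hc') mxE /= permE.
rewrite (_ : (c < n./2)%N = true); last by lia.
rewrite andbT; congr ((_ : bool)%:R); apply/eqP/eqP => h.
- apply: ord_inj => /=; lia.
- rewrite -h /=; lia.
Qed.

Lemma poly_nonzero s (M J : 'M[F]_s) : J *m J = 1%:M ->
  \det (map_mx polyC M + 'X *: map_mx polyC J) != 0.
Proof.
move=> hJ.
have e : (map_mx polyC M + 'X *: map_mx polyC J) *m map_mx polyC J =
         char_poly_mx (- (M *m J)).
  rewrite mulmxDl -scalemxAl -!map_mxM hJ map_mx1 scalemx1.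
  by rewrite /char_poly_mx map_mxN opprK addrC.
have := monic_neq0 (char_poly_monic (- (M *m J))).
by rewrite /char_poly -e det_mulmx mulf_eq0 negb_or => /andP[].
Qed.

Lemma horner_det s (M J : 'M[F]_s) (t : F) :
  (\det (map_mx polyC M + 'X *: map_mx polyC J)).[t] = \det (M + t *: J).
Proof.
rewrite -[_.[t]]/(horner_eval t _) -det_map_mx; congr (\det _).
apply/matrixP => i j; rewrite !mxE /horner_eval.
change (((M i j)%:P + 'X * (J i j)%:P).[t] = M i j + t * J i j).
by rewrite hornerD hornerC hornerM hornerX hornerC.
Qed.


Lemma dense X (e : F) : 0 < e -> exists t : F, `|t| < e /\
  forall s, (0 < s)%N -> (s <= n./2)%N -> \det (blk s (X + t *: Pm)) != 0.
Proof.
move=> he.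
pose p (s : nat) := \det (map_mx polyC (blk s X) + 'X *: map_mx polyC (Jm s)).
have hp0 : forall s, p s != 0 by move=> s; apply: poly_nonzero; apply: JmK.
pose Q := \prod_(s < n./2) p s.+1.
have hQ : Q != 0 by apply/prodf_neq0 => s _; apply: hp0.
pose rs := [seq e / (i.+2)%:R | i <- iota 0 (size Q)].
have hu : uniq rs.
  rewrite map_inj_uniq ?iota_uniq // => a b h.
  have h2 := invr_inj (mulfI (lt0r_neq0 he) h).
  by move/eqP: h2; rewrite eqr_nat !eqSS => /eqP.
have : ~~ all (root Q) rs.
  apply/negP => hall; have := max_poly_roots hQ hall hu.
  by rewrite size_map size_iota ltnn.
case/allPn => t /mapP [i _ ->] hroot.
exists (e / i.+2%:R); split.
  rewrite ger0_norm ?divr_ge0 ?ler0n ?ltW //.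
  by rewrite ltr_pdivrMr ?ltr0n // ltr_pMr // ltr1n.
case=> // s _ hsm.
have hs' : (s < n./2)%N by [].
move: hroot; rewrite /root horner_prod => /prodf_neq0 /(_ (Ordinal hs') isT).
by rewrite /p horner_det blk_lin blkP.
Qed.


Lemma blk_unch k k' X (j i : 'I_n) : (k' < k)%N -> (k < n)%N -> j = (n - k.+1)%N :> nat ->
  blk k'.+1 (X + delta_mx j i) = blk k'.+1 X.
Proof.
move=> hkk hk ej.
have e : X + delta_mx j i = X + 1 *: delta_mx j i by rewrite scale1r.
rewrite e blk_lin; apply/matrixP => r c; rewrite !mxE ent_delta.
rewrite (_ : (n - k'.+1 + r == j)%N = false) ?mulr0 ?addr0 //.
by apply/negbTE/eqP; rewrite ej; lia.
Qed.

Lemma indep_at X z : (forall s, (0 < s)%N -> (s <= n./2)%N -> \det (blk s X) != 0) ->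
  indep_differentials (fun k : 'I_(n./2) => @minorX F n k.+1) (X, z).
Proof.
move=> hnz.
exists (fun k j i => \det (blk k.+1 (X + delta_mx j i)) - \det (blk k.+1 X)), (fun _ => 0).
split.
- move=> k j i _ e' he'; exists 1 => // h hh _.
  rewrite !minorE /= minor_affine addrAC subrr add0r mulrC mulrA mulVf // mul1r.
  by rewrite subrr normr0.
- move=> k e' he'; exists 1 => // h hh _.
  by rewrite !minorE /= scaler0 addr0 subrr mul0r subrr normr0.
- move=> a ha _ k.
  have h2 := half2.
  have H : forall d (k : 'I_(n./2)), (n./2 - k <= d)%N -> a k = 0.
    elim => [|d IH] k' hk'.
      by move: (ltn_ord k') hk' => hl hk'; lia.
    case: (leqP (n./2 - k') d) => hd; first exact: IH.
    have hl := ltn_ord k'.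
    have hj : (n - k'.+1 < n)%N by lia.
    have hi : (k' < n)%N by lia.
    have hij : (Ordinal hi < Ordinal hj)%N by rewrite /=; lia.
    have := ha (Ordinal hj) (Ordinal hi) hij.
    rewrite (bigD1 k') //= big1 => [|k'' hk''].
      rewrite addr0 corner_diff //.
      move/eqP; rewrite !mulf_eq0 signr_eq0 /= => /orP [/eqP //|hdet].
      move: hdet hl; case: (nat_of_ord k') => [|kk]; first by rewrite det_mx00 oner_eq0.
      by move=> hdet hkk; move: (hnz kk.+1 isT (ltnW hkk)); rewrite hdet.
    case: (ltngtP k'' k') => hc.
    - by rewrite (blk_unch _ _ X (Ordinal hj) (Ordinal hi) hc hi) ?subrr ?mulr0.
    - by rewrite IH ?mul0r //; lia.
    - by move: hk''; rewrite (ord_inj hc) eqxx.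
  by apply: (H n./2); rewrite leq_subr.
Qed.

Lemma findep : func_independent (fun k : 'I_(n./2) => @minorX F n k.+1).
Proof.
move=> xi hxi e he.
have [t [ht hnz]] := dense xi.1 e he.
exists (xi.1 + t *: Pm, xi.2); split.
- move=> i j hij /=; rewrite !mxE hxi //.
  rewrite (_ : ((i + j)%N == n.-1) && (j < n./2)%N = false) ?mulr0 ?addr0 //.
  apply/negbTE/negP => /andP [/eqP h1 h2]; have := half2; lia.
- move=> i j /=; rewrite !mxE addrAC subrr add0r normrM.
  by case: (_ && _); rewrite ?normr1 ?mulr1 ?normr0 ?mulr0.
- by rewrite /= subrr normr0.
- exact: indep_at.
Qed.

Lemma main (ex : F -> F) (gamma : 'I_n -> F) : corollary1_statement ex gamma.
Proof.
split; last exact: findep.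
move=> k; apply: relinv; have := half2; have := ltn_ord k; lia.
Qed.

End Gen.

Local Open Scope complex_scope.

Theorem corollary1 (R : realType) (n : nat) (hn : (1 < n)%N) :
  (forall gamma : 'I_n -> R,
     ~ (exists c : R, forall i, gamma i = c) ->
     corollary1_statement (@expR R) gamma) /\
  (forall gamma : 'I_n -> R[i],
     ~ (exists c : R[i], forall i, gamma i = c) ->
     corollary1_statement (@cexp R) gamma).
Proof.
by split => gamma _; apply: main.
Qed.
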